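(* The following statements are equivalent for $(X,\tau,\mathcal{P})$: (1) $(X,\tau,\mathcal{P})$ is an almost $\mathcal{P}P$-space; (2) every $z$-ideal of $C(X)_\mathcal{P}$ is a $z^0$-ideal; (3) every maximal ideal of $C(X)_\mathcal{P}$ is a $z^0$-ideal; (4) every maximal ideal of $C(X)_\mathcal{P}$ consists entirely of zero divisors; (5) the sum of any two ideals of $C(X)_\mathcal{P}$ consisting of zero divisors is either $C(X)_\mathcal{P}$ or consists of zero divisors; (6) for each non-unit $f\in C(X)_\mathcal{P}$ there exists a nonzero $g\in C(X)_\mathcal{P}$ with $P(f)\subseteq Ann(g)$.
   Context: Let $(X,\tau)$ be a $T_1$ topological space and $\mathcal{P}$ an ideal of closed subsets of $X$ (a nonempty family of closed sets closed under finite unions and under taking closed subsets). For $f\colon X\to\mathbb{R}$, $D_f$ denotes the set of points of discontinuity of $f$, and $C(X)_\mathcal{P}=\{f\colon X\to\mathbb{R} : \overline{D_f}\in\mathcal{P}\}$, a commutative ring with unity under pointwise operations. For $f\in C(X)_\mathcal{P}$, $Z_\mathcal{P}(f)=\{x: f(x)=0\}$, $coz(f)=X\setminus Z_\mathcal{P}(f)$; $X_\mathcal{P}$ is $X$ with the topology having base $\{coz(f): f\in C(X)_\mathcal{P}\}$, $int_{X_\mathcal{P}}$ its interior operator. $(X,\tau,\mathcal{P})$ is an almost $\mathcal{P}P$-space if for every $f\in C(X)_\mathcal{P}$ with $Z_\mathcal{P}(f)\neq\emptyset$ one has $int_{X_\mathcal{P}}(Z_\mathcal{P}(f))\neq\emptyset$.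 $Ann(g)=\{h: hg=0\}$. In a commutative ring $R$ with unity, $M(a)$ (resp. $P(a)$) is the intersection of all maximal (resp. minimal prime) ideals containing $a$; an ideal $I$ is a $z$-ideal if $a\in I\Rightarrow M(a)\subseteq I$, and a $z^0$-ideal if $a\in I\Rightarrow P(a)\subseteq I$. *)

(* Defs.v *)
From HB Require Import structures.
From mathcomp Require Import all_boot all_order all_algebra.
From mathcomp Require Import all_classical all_reals all_analysis.
Set Implicit Arguments. Unset Strict Implicit. Unset Printing Implicit Defensive.
Import Order.TTheory GRing.Theory Num.Theory.
Import numFieldNormedType.Exports.
Local Open Scope classical_set_scope.
Local Open Scope ring_scope.

Section Defs.
Variables (R : realType) (T : topologicalType).

Definition closed_ideal (P : set (set T)) : Prop :=
  [/\ P !=set0,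
      (forall A, P A -> closed A),
      (forall A B, P A -> P B -> P (A `|` B)) &
      (forall A B, P A -> closed B -> B `<=` A -> P B)].

Definition discont (f : T -> R) : set T := [set x | ~ {for x, continuous f}].

Definition CP (P : set (set T)) : set (T -> R) :=
  [set f | P (closure (discont f))].

Definition fadd (f g : T -> R) : T -> R := fun x => f x + g x.
Definition fmul (f g : T -> R) : T -> R := fun x => f x * g x.
Definition fzero : T -> R := fun _ => 0.
Definition fone : T -> R := fun _ => 1.

Definition ZP (f : T -> R) : set T := [set x | f x = 0].
Definition coz (f : T -> R) : set T := [set x | f x <> 0].

(** interior in X_P (topology with base {coz f : f in C(X)_P}): union of the
    basic open sets contained in A. *)
Definition intXP (P : set (set T)) (A : set T) : set T :=
  [set x | exists f, [/\ CP P f, f x <> 0 & coz f `<=` A]].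

Definition almost_PP (P : set (set T)) : Prop :=
  forall f, CP P f -> ZP f !=set0 -> intXP P (ZP f) !=set0.

Definition is_ideal (P : set (set T)) (I : set (T -> R)) : Prop :=
  [/\ I `<=` CP P, I fzero,
      (forall f g, I f -> I g -> I (fadd f g)) &
      (forall f g, I f -> CP P g -> I (fmul g f))].

Definition proper_ideal P I := is_ideal P I /\ ~ I fone.

Definition maximal_ideal P (M : set (T -> R)) : Prop :=
  proper_ideal P M /\
  forall J, proper_ideal P J -> M `<=` J -> J = M.

Definition prime_ideal P (Q : set (T -> R)) : Prop :=
  proper_ideal P Q /\
  forall f g, CP P f -> CP P g -> Q (fmul f g) -> Q f \/ Q g.

Definition minimal_prime P (Q : set (T -> R)) : Prop :=
  prime_ideal P Q /\
  forall Q', prime_ideal P Q' -> Q' `<=` Q -> Q' = Q.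

Definition Mset P (a : T -> R) : set (T -> R) :=
  [set h | CP P h /\ forall M, maximal_ideal P M -> M a -> M h].
Definition Pset P (a : T -> R) : set (T -> R) :=
  [set h | CP P h /\ forall Q, minimal_prime P Q -> Q a -> Q h].

Definition z_ideal P I := is_ideal P I /\ forall a, I a -> Mset P a `<=` I.
Definition z0_ideal P I := is_ideal P I /\ forall a, I a -> Pset P a `<=` I.

Definition zero_divisor P (f : T -> R) : Prop :=
  CP P f /\ exists g, [/\ CP P g, g <> fzero & fmul f g = fzero].

Definition is_unit P (f : T -> R) : Prop :=
  CP P f /\ exists g, CP P g /\ fmul f g = fone.

Definition Ann P (g : T -> R) : set (T -> R) :=
  [set h | CP P h /\ fmul h g = fzero].

Definition ideal_sum (I J : set (T -> R)) : set (T -> R) :=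
  [set h | exists f g, [/\ I f, J g & h = fadd f g]].

End Defs.

(* Main.v *)
Require Import Defs.
From HB Require Import structures.
From mathcomp Require Import all_boot all_order all_algebra.
From mathcomp Require Import all_classical all_reals all_analysis.
From mathcomp Require Import lra ring.
Set Implicit Arguments. Unset Strict Implicit. Unset Printing Implicit Defensive.
Import Order.TTheory GRing.Theory Num.Theory.
Import numFieldNormedType.Exports.
Local Open Scope classical_set_scope.
Local Open Scope ring_scope.


Section S.
Variables (R : realType) (T : topologicalType) (P : set (set T)).
Hypothesis hP : closed_ideal P.
Local Notation CP := (@CP R T P).

Lemma CP_subA (A : set T) (g : T -> R) : P A -> discont g `<=` A -> CP g.
Proof.
move=> PA dgf; case: hP => _ Pcl _ Psub.
have cA := Pcl A PA.
apply: Psub PA _ _; first exact: closed_closure.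
have -> : A = closure A by exact: (closure_id A).1 cA.
exact: closureS.
Qed.

Lemma CP_sub (f g : T -> R) : CP f -> discont g `<=` discont f -> CP g.
Proof.
move=> Pf dgf; apply: CP_subA Pf _.
exact: subset_trans dgf (@subset_closure _ _).
Qed.

Lemma CP_op2 (op : R -> R -> R) (f g : T -> R) :
  (forall (f g : T -> R) x, {for x, continuous f} -> {for x, continuous g} ->
     {for x, continuous (fun y => op (f y) (g y))}) ->
  CP f -> CP g -> CP (fun y => op (f y) (g y)).
Proof.
move=> hop Pf Pg; case: hP => _ Pcl PU Psub.
have := PU _ _ Pf Pg; rewrite -closureU => PU'.
apply: CP_subA PU' _ => x /= nc; apply: subset_closure.
apply: contrapT => /not_orP [h1 h2]; apply: nc.
by apply: hop; apply: contrapT.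
Qed.

Lemma CPD f g : CP f -> CP g -> CP (fadd f g).
Proof. by apply: CP_op2 => f0 g0 x c1 c2; apply: continuousD. Qed.
Lemma CPM f g : CP f -> CP g -> CP (fmul f g).
Proof. by apply: CP_op2 => f0 g0 x c1 c2; apply: continuousM. Qed.
Lemma CPmax f g : CP f -> CP g -> CP (fun y => Num.max (f y) (g y)).
Proof. by apply: CP_op2 => f0 g0 x c1 c2; apply: continuous_max. Qed.
Lemma CPmin f g : CP f -> CP g -> CP (fun y => Num.min (f y) (g y)).
Proof. by apply: CP_op2 => f0 g0 x c1 c2; apply: continuous_min. Qed.
Lemma CPc (c : R) : CP (fun _ => c).
Proof.
case: hP => [[A PA]] _ _ Psub.
apply: CP_subA PA _ => x /= h; exfalso; apply: h; exact: cvg_cst.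
Qed.
Lemma CPV f : CP f -> (forall x, f x != 0) -> CP (fun x => (f x)^-1).
Proof.
move=> Pf nz; apply: CP_sub Pf _ => x /= nc c; apply: nc.
exact: continuousV.
Qed.
End S.

Section SB.
Variables (R : realType) (T : topologicalType) (P : set (set T)).
Hypothesis hP : closed_ideal P.
Local Notation CP := (@CP R T P).

Definition msetP (S : set (T -> R)) := [/\ S `<=` CP, S (@fone R T), ~ S (@fzero R T) &
  forall f g, S f -> S g -> S (fmul f g)].

Lemma mset_max S : msetP S -> exists S',
  [/\ msetP S', S `<=` S' & forall B, msetP B -> S' `<=` B -> B = S'].
Proof.
move=> mS; have [mS1 mS2 mS3 mS4] := mS.
have [A [FA Amax]] : exists A, msetP (S `|` A) /\
    forall B, A `<` B -> ~ msetP (S `|` B).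
  apply: (@Zorn_bigcup _ (fun A => msetP (S `|` A))) => F FP Ftot.
  split.
  - move=> y [Sy|[X FX Xy]]; first exact: mS1.
    by have [+ _ _ _] := FP X FX; apply; right.
  - by left.
  - case=> [//|[X FX X0]].
    by have [_ _ + _] := FP X FX; apply; right.
  - move=> f g [Sf|[X FX Xf]] [Sg|[Y FY Yg]].
    + by left; apply: mS4.
    + have [_ _ _ +] := FP Y FY; move=> /(_ f g (or_introl Sf) (or_intror Yg)).
      by case=> [?|?]; [left|right; exists Y].
    + have [_ _ _ +] := FP X FX; move=> /(_ f g (or_intror Xf) (or_introl Sg)).
      by case=> [?|?]; [left|right; exists X].
    + have [XY|YX] := Ftot X Y FX FY.
      * have [_ _ _ +] := FP Y FY; move=> /(_ f g (or_intror (XY _ Xf)) (or_intror Yg)).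
        by case=> [?|?]; [left|right; exists Y].
      * have [_ _ _ +] := FP X FX; move=> /(_ f g (or_intror Xf) (or_intror (YX _ Yg))).
        by case=> [?|?]; [left|right; exists X].
exists (S `|` A); split; [exact: FA|by move=> ? ?; left|].
move=> B mB SAB.
have [BSA|nBSA] := pselect (B `<=` S `|` A).
  by apply/seteqP; split.
exfalso; apply: (Amax B).
  split; first by move=> x Ax; apply: SAB; right.
  by move=> BA; apply: nBSA => x /BA ?; right.
by rewrite setUidr // => x Sx; apply: SAB; left.
Qed.


Lemma fmul0P (f g : T -> R) : (forall x, f x = 0 \/ g x = 0) -> fmul f g = @fzero R T.
Proof.
move=> h; apply: funext => x; rewrite /fmul /fzero.
by case: (h x) => ->; rewrite ?mul0r ?mulr0.
Qed.

Lemma fmul0E (f g : T -> R) x : fmul f g = @fzero R T -> f x = 0 \/ g x = 0.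
Proof.
move=> /(congr1 (fun k => k x)); rewrite /fmul /fzero => /eqP.
by rewrite mulf_eq0 => /orP[/eqP|/eqP]; [left|right].
Qed.

Lemma mset_key S a : msetP S ->
  (forall B, msetP B -> S `<=` B -> B = S) ->
  CP a -> ~ S a -> exists s, S s /\ fmul a s = @fzero R T.
Proof.
move=> [mS1 mS2 mS3 mS4] Smax Pa nSa; apply: contrapT => hno.
pose B := [set t | CP t /\ exists s, S s /\ (forall x, a x != 0 -> s x != 0 -> t x != 0)].
have SB : S `<=` B by move=> t St; split; [exact: mS1|exists t; split].
have mB : msetP B.
  split.
  - by move=> t [].
  - by apply: SB.
  - move=> [_ [s [Ss hs]]]; apply: hno; exists s; split => //.
    apply: fmul0P => x.
    have [ax0|ax0] := eqVneq (a x) 0; first by left.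
    have [sx0|sx0] := eqVneq (s x) 0; first by right.
    by have := hs x ax0 sx0; rewrite /fzero eqxx.
  - move=> f g [Pf [s1 [Ss1 h1]]] [Pg [s2 [Ss2 h2]]]; split; first exact: (CPM hP).
    exists (fmul s1 s2); split; first exact: mS4.
    move=> x ax; rewrite /fmul mulf_eq0 negb_or => /andP[n1 n2].
    by rewrite mulf_neq0 // ?h1 ?h2.
apply: nSa; rewrite -(Smax B mB SB); split => //.
exists (@fone R T); split => // x _ _; exact: ax.
Qed.


Lemma mset_prime S : msetP S -> exists Q, minimal_prime P Q /\ forall h, S h -> ~ Q h.
Proof.
move=> mS; have [S' [mS' SS' Smax]] := mset_max mS.
have [m1 m2 m3 m4] := mS'.
have key := mset_key mS' Smax.
pose Q := [set h | CP h /\ ~ S' h].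
have iQ : is_ideal P Q.
  split.
  - by move=> h [].
  - by split; [exact: (CPc hP)|].
  - move=> f g [Pf nf] [Pg ng]; split; first exact: (CPD hP).
    have [s1 [S1 e1]] := key f Pf nf; have [s2 [S2 e2]] := key g Pg ng.
    move=> Sfg; apply: m3.
    have -> : @fzero R T = fmul (fadd f g) (fmul s1 s2).
      apply/esym/funext => x; rewrite /fmul /fadd /fzero.
      have [h1|h1] := fmul0E x e1; have [h2|h2] := fmul0E x e2;
        by rewrite ?h1 ?h2 ?(addr0, add0r, mulr0, mul0r).
    exact: (m4 _ _ Sfg (m4 _ _ S1 S2)).
  - move=> f g [Pf nf] Pg; split; first exact: (CPM hP).
    have [s1 [S1 e1]] := key f Pf nf.
    move=> Sgf; apply: m3.
    have -> : @fzero R T = fmul (fmul g f) s1.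
      apply/esym/fmul0P => x; rewrite /fmul.
      by have [->|->] := fmul0E x e1; [left; rewrite mulr0|right].
    exact: m4.
have pQ : prime_ideal P Q.
  split; first by split => // -[].
  move=> f g Pf Pg [_ nfg].
  have [Sf|nf] := pselect (S' f); last by left.
  have [Sg|ng] := pselect (S' g); last by right.
  by exfalso; apply: nfg; apply: m4.
exists Q; split; last by move=> h Sh [_]; apply; apply: SS'.
split => // Q' pQ' Q'Q.
have [[[iQ'1 iQ'2 iQ'3 iQ'4] nQ'1] pQ'2] := pQ'.
pose B := [set h | CP h /\ ~ Q' h].
have mB : msetP B.
  split.
  - by move=> h [].
  - by split; [exact: (CPc hP)|].
  - by case.
  - move=> f g [Pf nf] [Pg ng]; split; first exact: (CPM hP).
    by case/(pQ'2 _ _ Pf Pg).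
have S'B : S' `<=` B.
  by move=> h Sh; split; [exact: m1| move=> /Q'Q [_]; apply].
have eB := Smax B mB S'B.
apply/seteqP; split => // h [Ph nh].
apply: contrapT => nQ'h.
by apply: nh; rewrite -eB.
Qed.

End SB.

Section SC.
Variables (R : realType) (T : topologicalType) (P : set (set T)).
Hypothesis hP : closed_ideal P.
Local Notation CP := (@CP R T P).

Lemma sq2_eq0 (u v : R) : u * u + v * v = 0 -> u = 0 /\ v = 0.
Proof. move=> h; split; nra. Qed.

Lemma PA a h b : CP a -> Pset P a h -> CP b -> fmul a b = @fzero R T ->
  fmul h b = @fzero R T.
Proof.
move=> Pa [Ph hQ] Pb eab; apply: contrapT => nhb.
have [y hy] : exists y, h y * b y != 0.
  apply: contrapT => nex; apply: nhb; apply: funext => x.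
  rewrite /fmul /fzero; apply/eqP; apply: contrapT => hx; apply: nex.
  by exists x; apply/negP.
pose S := [set k | CP k /\ forall x, h x * b x != 0 -> k x != 0].
have mS : msetP P S.
  split.
  - by move=> k [].
  - by split; [exact: (CPc hP)|move=> x _; rewrite /fone oner_neq0].
  - by move=> [_ /(_ y hy)]; rewrite /fzero eqxx.
  - move=> f g [Pf hf] [Pg hg]; split; first exact: (CPM hP).
    by move=> x hx; rewrite /fmul mulf_neq0 // ?hf ?hg.
have [Q [mQ QS]] := mset_prime hP mS.
have [[[iQ1 iQ2 iQ3 iQ4] nQ1] pQ] := mQ.1.
have Qab : Q (fmul a b) by rewrite eab.
case: (pQ _ _ Pa Pb Qab) => [Qa|Qb].
  have Qh := hQ Q mQ Qa.
  apply: (QS (fmul b h)); last exact: iQ4.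
  split; first exact: (CPM hP).
  by move=> x; rewrite /fmul mulrC.
apply: (QS b) => //; split => // x; rewrite mulf_eq0 negb_or => /andP[].
by [].
Qed.

Lemma Z2 Q f : minimal_prime P Q -> Q f ->
  exists b, [/\ CP b, ~ Q b & fmul f b = @fzero R T].
Proof.
move=> mQ Qf; have [[[iQ1 iQ2 iQ3 iQ4] nQ1] pQ] := mQ.1.
apply: contrapT => nex.
have hno : forall b, CP b -> ~ Q b -> fmul f b <> @fzero R T.
  by move=> b Pb nb e; apply: nex; exists b.
pose S := [set k | CP k /\ exists b, [/\ CP b, ~ Q b &
   forall x, b x != 0 -> f x != 0 -> k x != 0]].
have mS : msetP P S.
  split.
  - by move=> k [].
  - split; first exact: (CPc hP).
    by exists (@fone R T); split; [exact: (CPc hP)|exact: nQ1|move=> x _ _; rewrite /fone oner_neq0].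
  - move=> [_ [b [Pb nb hb]]]; apply: (hno b Pb nb); apply: fmul0P => x.
    have [fx|fx] := eqVneq (f x) 0; first by left.
    have [bx|bx] := eqVneq (b x) 0; first by right.
    by have := hb x bx fx; rewrite /fzero eqxx.
  - move=> g k [Pg [b1 [P1 n1 h1]]] [Pk [b2 [P2 n2 h2]]]; split; first exact: (CPM hP).
    exists (fmul b1 b2); split; first exact: (CPM hP).
    + by case/(pQ _ _ P1 P2).
    + move=> x; rewrite /fmul mulf_eq0 negb_or => /andP[x1 x2] fx.
      by rewrite mulf_neq0 // ?h1 ?h2.
have [Q' [mQ' Q'S]] := mset_prime hP mS.
have Q'Q : Q' `<=` Q.
  move=> h Q'h; apply: contrapT => nQh.
  have [[[iQ'1 _ _ _] _] _] := mQ'.1.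
  apply: (Q'S h) => //; split; first exact: iQ'1.
  by exists h; split => //; apply: iQ'1.
have eQ := mQ.2 Q' mQ'.1 Q'Q.
apply: (Q'S f); last by rewrite eQ.
split; first exact: iQ1.
exists (@fone R T); split; [exact: (CPc hP)|exact: nQ1|].
by move=> x _.
Qed.

End SC.

Section SD.
Variables (R : realType) (T : topologicalType) (P : set (set T)).
Hypothesis hP : closed_ideal P.
Local Notation CP := (@CP R T P).

Lemma unitP f : CP f -> (forall x, f x != 0) -> is_unit P f.
Proof.
move=> Pf nz; split => //; exists (fun x => (f x)^-1); split; first exact: (CPV hP).
by apply: funext => x; rewrite /fmul /fone mulfV.
Qed.

Lemma unit_nz (f : T -> R) : is_unit P f -> forall x, f x != 0.
Proof.
move=> [_ [g [_ e]]] x; have := congr1 (fun k => k x) e; rewrite /fmul /fone.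
by move=> ex; apply/eqP => fx; move: ex; rewrite fx mul0r => /eqP; rewrite eq_sym oner_eq0.
Qed.

Lemma nonunit_zero (f : T -> R) : CP f -> ~ is_unit P f -> exists x, f x = 0.
Proof.
move=> Pf nu; apply: contrapT => nex; apply: nu; apply: unitP => // x.
by apply/eqP => fx; apply: nex; exists x.
Qed.

Lemma ideal_unit (I : set (T -> R)) u : is_ideal P I -> I u -> is_unit P u -> I (@fone R T).
Proof.
move=> [_ _ _ i4] Iu [_ [v [Pv e]]].
have := i4 _ _ Iu Pv; congr I; rewrite -e; apply: funext => x.
by rewrite /fmul mulrC.
Qed.

Definition Mx (x0 : T) := [set g : T -> R | CP g /\ g x0 = 0].

Lemma Mx_max x0 : maximal_ideal P (Mx x0).
Proof.
have iM : is_ideal P (Mx x0).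
  split.
  - by move=> g [].
  - by split; [exact: (CPc hP)|].
  - move=> f g [Pf f0] [Pg g0]; split; first exact: (CPD hP).
    by rewrite /fadd f0 g0 addr0.
  - move=> f g [Pf f0] Pg; split; first exact: (CPM hP).
    by rewrite /fmul f0 mulr0.
split; first by split => // -[_]; rewrite /fone => /eqP; rewrite oner_eq0.
move=> J [[iJ1 iJ2 iJ3 iJ4] nJ] MJ.
apply/seteqP; split => // g Jg; split; first exact: iJ1.
apply: contrapT => gx; apply: nJ.
pose c := g x0.
have Jc : J (fun _ => c).
  have Jm : J (fadd g (fun _ => - c)).
    apply: MJ; split; first by apply: (CPD hP); [exact: iJ1|exact: (CPc hP)].
    by rewrite /fadd subrr.
  have Jn : J (fmul (fun _ => -1) (fadd g (fun _ => - c))).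
    by apply: iJ4 => //; exact: (CPc hP).
  have := iJ3 _ _ Jg Jn; congr J; apply: funext => x.
  by rewrite /fadd /fmul mulN1r opprD opprK addrA subrr add0r.
apply: (ideal_unit (And4 iJ1 iJ2 iJ3 iJ4) Jc); apply: unitP; first exact: (CPc hP).
by move=> _; apply/eqP.
Qed.

Lemma Mchar (M : set (T -> R)) a h : maximal_ideal P M -> M a -> CP h ->
  (forall x, a x = 0 -> h x = 0) -> M h.
Proof.
move=> [[[iM1 iM2 iM3 iM4] nM] Mmax] Ma Ph ah.
apply: contrapT => nMh.
pose J := [set k | exists m g, [/\ M m, CP g & k = fadd m (fmul g h)]].
have iJ : is_ideal P J.
  split.
  - move=> k [m [g [Mm Pg ->]]]; apply: (CPD hP); first exact: iM1.
    exact: (CPM hP).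
  - exists (@fzero R T), (@fzero R T); split => //; first exact: (CPc hP).
    by apply: funext => x; rewrite /fadd /fmul /fzero mul0r addr0.
  - move=> k1 k2 [m1 [g1 [M1 P1 ->]]] [m2 [g2 [M2 P2 ->]]].
    exists (fadd m1 m2), (fadd g1 g2); split; [exact: iM3|exact: (CPD hP)|].
    apply: funext => x; rewrite /fadd /fmul mulrDl.
    by rewrite -!addrA; congr (_ + _); rewrite addrC -addrA; congr (_ + _); rewrite addrC.
  - move=> k c [m [g [Mm Pg ->]]] Pc.
    exists (fmul c m), (fmul c g); split; [exact: iM4|exact: (CPM hP)|].
    by apply: funext => x; rewrite /fadd /fmul mulrDr mulrA.
have MJ : M `<=` J.
  move=> m Mm; exists m, (@fzero R T); split => //; first exact: (CPc hP).
  by apply: funext => x; rewrite /fadd /fmul /fzero mul0r addr0.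
have hJ : J h.
  exists (@fzero R T), (@fone R T); split => //; first exact: (CPc hP).
  by apply: funext => x; rewrite /fadd /fmul /fzero /fone mul1r add0r.
have J1 : J (@fone R T).
  apply: contrapT => nJ1.
  by apply: nMh; rewrite -(Mmax J (conj iJ nJ1) MJ).
case: J1 => m [g [Mm Pg e1]].
pose u := fadd (fmul m m) (fmul a a).
have Mu : M u by apply: iM3; apply: iM4 => //; apply: iM1.
apply: nM; apply: (ideal_unit (And4 iM1 iM2 iM3 iM4) Mu); apply: unitP.
  by apply: (CPD hP); apply: (CPM hP); apply: iM1.
move=> x; apply/eqP; rewrite /u /fadd /fmul => /sq2_eq0 [mx ax].
have := congr1 (fun k => k x) e1; rewrite /fadd /fmul /fone mx (ah x ax) mulr0 addr0.
by move/eqP; rewrite oner_eq0.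
Qed.

End SD.

Section SE.
Variables (R : realType) (T : topologicalType) (P : set (set T)).
Hypothesis hP : closed_ideal P.
Local Notation CP := (@CP R T P).

Lemma nz_fun (g : T -> R) : g <> @fzero R T -> exists y, g y <> 0.
Proof.
move=> ng; apply: contrapT => nex; apply: ng; apply: funext => y.
by apply: contrapT => gy; apply: nex; exists y.
Qed.

Lemma zd_int (f : T -> R) : zero_divisor P f -> intXP R P (ZP f) !=set0.
Proof.
move=> [Pf [g [Pg ng e]]]; have [y gy] := nz_fun ng.
exists y, g; split => // z /= gz.
by have [|] := fmul0E z e.
Qed.

Lemma almost_zd (f : T -> R) : almost_PP R P -> CP f -> (exists x, f x = 0) ->
  zero_divisor P f.
Proof.
move=> aP Pf [x fx]; have [y [g [Pg gy cg]]] := aP f Pf (ex_intro _ x fx).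
split => //; exists g; split => //.
  by move=> g0; apply: gy; rewrite g0.
apply: fmul0P => z; have [gz|gz] := pselect (g z = 0); first by right.
by left; apply: cg.
Qed.

Lemma L01 : almost_PP R P -> forall I : set (T -> R), z_ideal P I -> z0_ideal P I.
Proof.
move=> aP I [iI zI]; split => // a Ia h [Ph hQ].
have Pa : CP a by case: iI => + _ _ _; apply.
apply: (zI a Ia); split => // M mM Ma.
apply: (Mchar hP mM Ma Ph) => x ax; apply: contrapT => hx.
pose c := h x.
pose d := fadd h (fun _ => - c).
pose k := fadd (fmul a a) (fmul d d).
have Pd : CP d by apply: (CPD hP) => //; exact: (CPc hP).
have Pk : CP k by apply: (CPD hP); apply: (CPM hP).
have kx : ZP k x by rewrite /ZP /= /k /fadd /fmul /d /fadd ax subrr mulr0 addr0.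
have [y [g [Pg gy cg]]] := aP k Pk (ex_intro _ x kx).
have eag : fmul a g = @fzero R T.
  apply: fmul0P => z; have [gz|gz] := pselect (g z = 0); first by right.
  by left; have := cg z gz; rewrite /ZP /k /fadd /fmul /= => /sq2_eq0 [].
have ehg := PA hP Pa (conj Ph hQ) Pg eag.
have [/sq2_eq0 [_]] := (cg y gy).
rewrite /d /fadd => /eqP; rewrite subr_eq0 => /eqP hy.
by have [|] := fmul0E y ehg; [rewrite hy|].
Qed.

Lemma L12 : (forall I : set (T -> R), z_ideal P I -> z0_ideal P I) ->
  forall M : set (T -> R), maximal_ideal P M -> z0_ideal P M.
Proof.
move=> h M mM; apply: h; split; first by case: mM => -[].
by move=> a Ma g [_ hg]; apply: hg.
Qed.

Lemma L23 : (forall M : set (T -> R), maximal_ideal P M -> z0_ideal P M) ->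
  forall M : set (T -> R), maximal_ideal P M -> M `<=` (@zero_divisor R T P).
Proof.
move=> h M mM f Mf; have [[[iM1 _ _ _] nM] _] := mM.
split; first exact: iM1.
apply: contrapT => nex; apply: nM.
have [_ zM] := h M mM; apply: (zM f Mf); split; first exact: (CPc hP).
move=> Q mQ Qf; have [b [Pb nb e]] := Z2 hP mQ Qf.
exfalso; apply: nex; exists b; split => // b0; apply: nb; rewrite b0.
by case: mQ => -[[[]]].
Qed.

Lemma L30 : (forall M : set (T -> R), maximal_ideal P M -> M `<=` (@zero_divisor R T P)) -> almost_PP R P.
Proof.
move=> h f Pf [x0 fx0]; apply: zd_int.
exact: (h _ (Mx_max R hP x0) f (conj Pf fx0)).
Qed.

Lemma L04 : almost_PP R P -> forall I J : set (T -> R), is_ideal P I -> is_ideal P J ->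
  I `<=` (@zero_divisor R T P) -> J `<=` (@zero_divisor R T P) ->
  ideal_sum I J = CP \/ ideal_sum I J `<=` (@zero_divisor R T P).
Proof.
move=> aP I J [iI1 iI2 iI3 iI4] [iJ1 iJ2 iJ3 iJ4] _ _.
have sCP : ideal_sum I J `<=` CP.
  by move=> k [i [j [Ii Jj ->]]]; apply: (CPD hP); [exact: iI1|exact: iJ1].
have [[u [su uu]]|nu] := pselect (exists u, ideal_sum I J u /\ is_unit P u).
  left; apply/seteqP; split => // c Pc.
  have [i [j [Ii Jj eu]]] := su; have [_ [v [Pv uv]]] := uu.
  have Pcv : CP (fmul c v) by exact: (CPM hP).
  exists (fmul (fmul c v) i), (fmul (fmul c v) j); split; [exact: iI4|exact: iJ4|].
  apply: funext => x; have := congr1 (fun k => k x) uv.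
  rewrite eu /fmul /fadd /fone => e.
  by rewrite -{1}(mulr1 (c x)) -e -mulrDr mulrAC mulrA.
right => k sk; apply: almost_zd => //.
  exact: (sCP _ sk).
apply: (nonunit_zero hP (sCP _ sk)).
by move=> uk; apply: nu; exists k.
Qed.

Lemma L05 : almost_PP R P -> forall f : T -> R, CP f -> ~ is_unit P f ->
  exists g, [/\ CP g, g <> @fzero R T & Pset P f `<=` Ann P g].
Proof.
move=> aP f Pf nu; have [x fx] := nonunit_zero hP Pf nu.
have [_ [g [Pg ng e]]] := almost_zd aP Pf (ex_intro _ x fx).
exists g; split => // h Ph; split; first by case: Ph.
exact: (PA hP Pf Ph Pg e).
Qed.

Lemma L50 : (forall f : T -> R, CP f -> ~ is_unit P f ->
  exists g, [/\ CP g, g <> @fzero R T & Pset P f `<=` Ann P g]) -> almost_PP R P.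
Proof.
move=> h f Pf [x fx].
have nu : ~ is_unit P f by move=> /unit_nz /(_ x); rewrite fx eqxx.
have [g [Pg ng sg]] := h f Pf nu.
have [_ e] := sg f (conj Pf (fun Q _ Qf => Qf)).
apply: zd_int; split => //; exists g; split => //.
Qed.

End SE.

Section SF.
Variables (R : realType) (T : topologicalType) (P : set (set T)).
Hypothesis hP : closed_ideal P.
Local Notation CP := (@CP R T P).

Definition prin (g : T -> R) := [set k | exists c, CP c /\ k = fmul c g].

Lemma prin_ideal g : CP g -> is_ideal P (prin g).
Proof.
move=> Pg; split.
- by move=> k [c [Pc ->]]; apply: (CPM hP).
- exists (@fzero R T); split; first exact: (CPc hP).
  by apply: funext => x; rewrite /fmul /fzero mul0r.
- move=> k1 k2 [c1 [P1 ->]] [c2 [P2 ->]]; exists (fadd c1 c2); split; first exact: (CPD hP).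
  by apply: funext => x; rewrite /fmul /fadd mulrDl.
- move=> k d [c [Pc ->]] Pd; exists (fmul d c); split; first exact: (CPM hP).
  by apply: funext => x; rewrite /fmul mulrA.
Qed.

Lemma prin_zd g w : CP g -> CP w -> w <> @fzero R T -> fmul g w = @fzero R T ->
  prin g `<=` @zero_divisor R T P.
Proof.
move=> Pg Pw nw e k [c [Pc ->]]; split; first exact: (CPM hP).
exists w; split => //; apply: funext => x.
have := congr1 (fun k => k x) e; rewrite /fmul /fzero => e'.
by rewrite -mulrA e' mulr0.
Qed.

Lemma L40 : (forall I J : set (T -> R), is_ideal P I -> is_ideal P J ->
  I `<=` (@zero_divisor R T P) -> J `<=` (@zero_divisor R T P) ->
  ideal_sum I J = CP \/ ideal_sum I J `<=` (@zero_divisor R T P)) -> almost_PP R P.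
Proof.
move=> h f Pf [x0 fx0].
have [[x1 fx1]|nf] := pselect (exists x1, f x1 != 0); last first.
  exists x0, (@fone R T); split; [exact: (CPc hP)|by rewrite /fone; apply/eqP; rewrite oner_eq0|].
  move=> z _; apply/eqP; apply: contrapT => /negP fz; apply: nf; by exists z.
pose c := f x1.
pose u := fmul f (fun _ => c^-1).
have Pu : CP u by apply: (CPM hP) => //; exact: (CPc hP).
pose phi := fun y => Num.min (Num.max (4 * u y - 1) 0) 1.
have Pphi : CP phi.
  apply: (CPmin hP); last exact: (CPc hP).
  apply: (CPmax hP); last exact: (CPc hP).
  apply: (CPD hP); last exact: (CPc hP).
  by apply: (CPM hP) => //; exact: (CPc hP).
pose psi0 := fun y => Num.max (1 + (-4) * u y) 0.
pose psi1 := fun y => Num.max (2 * u y - 1) 0.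
have Ppsi0 : CP psi0.
  apply: (CPmax hP); last exact: (CPc hP).
  apply: (CPD hP); first exact: (CPc hP).
  by apply: (CPM hP) => //; exact: (CPc hP).
have Ppsi1 : CP psi1.
  apply: (CPmax hP); last exact: (CPc hP).
  apply: (CPD hP); last exact: (CPc hP).
  by apply: (CPM hP) => //; exact: (CPc hP).
pose om := fadd (fun _ => 1) (fmul (fun _ => -1) phi).
have Pom : CP om.
  apply: (CPD hP); first exact: (CPc hP).
  by apply: (CPM hP) => //; exact: (CPc hP).
have ux0 : u x0 = 0 by rewrite /u /fmul fx0 mul0r.
have ux1 : u x1 = 1 by rewrite /u /fmul mulfV.
have A0 : forall y, psi0 y != 0 -> phi y = 0.
  move=> y; rewrite /psi0 /phi.
  have [h1|h1] := boolP (1 + (-4) * u y <= 0).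
    by rewrite (max_r h1) eqxx.
  move=> _; rewrite max_r; last by rewrite -ltNge in h1; lra.
  by rewrite min_l //; lra.
have A1 : forall y, psi1 y != 0 -> phi y = 1.
  move=> y; rewrite /psi1 /phi.
  have [h1|h1] := boolP (2 * u y - 1 <= 0).
    by rewrite (max_r h1) eqxx.
  move=> _; rewrite -ltNge in h1; rewrite max_l; last by lra.
  by rewrite min_r //; lra.
have n0 : psi0 <> @fzero R T.
  move=> /(congr1 (fun k => k x0)); rewrite /psi0 /fzero ux0 mulr0 addr0.
  by rewrite max_l //; apply/eqP; rewrite oner_eq0.
have n1 : psi1 <> @fzero R T.
  move=> /(congr1 (fun k => k x1)); rewrite /psi1 /fzero ux1 mulr1.
  rewrite max_l; last by lra.
  by move=> /eqP; lra.
pose g1 := fmul f phi.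
pose g2 := fmul f om.
have e1 : fmul g1 psi0 = @fzero R T.
  apply: fmul0P => y; have [p0|p0] := eqVneq (psi0 y) 0; first by right.
  by left; rewrite /g1 /fmul A0 // mulr0.
have e2 : fmul g2 psi1 = @fzero R T.
  apply: fmul0P => y; have [p0|p0] := eqVneq (psi1 y) 0; first by right.
  by left; rewrite /g2 /om /fmul /fadd A1 // mulr1 subrr mulr0.
have Pg1 : CP g1 by exact: (CPM hP).
have Pg2 : CP g2 by exact: (CPM hP).
have [eS|sS] := h _ _ (prin_ideal Pg1) (prin_ideal Pg2)
  (prin_zd Pg1 Ppsi0 n0 e1) (prin_zd Pg2 Ppsi1 n1 e2).
  have : ideal_sum (prin g1) (prin g2) (@fone R T) by rewrite eS; exact: (CPc hP).
  move=> [k1 [k2 [[c1 [_ ->]] [c2 [_ ->]] e]]].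
  have := congr1 (fun k => k x0) e; rewrite /fone /fadd /g1 /g2 /fmul fx0.
  by rewrite !mul0r !mulr0 addr0 => /eqP; rewrite oner_eq0.
apply: zd_int; apply: sS.
exists g1, g2; split.
- by exists (@fone R T); split; [exact: (CPc hP)|apply: funext => y; rewrite /fmul mul1r].
- by exists (@fone R T); split; [exact: (CPc hP)|apply: funext => y; rewrite /fmul mul1r].
- apply: funext => y; rewrite /fadd /g1 /g2 /om /fmul /fadd; ring.
Qed.

End SF.

Unset Implicit Arguments.
Theorem theorem2p15 (R : realType) (T : topologicalType) (P : set (set T))
  (hT1 : @accessible_space T) (hP : closed_ideal P) :
  [<-> @almost_PP R T P;
       forall I, @z_ideal R T P I -> @z0_ideal R T P I;
       forall M, @maximal_ideal R T P M -> @z0_ideal R T P M;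
       forall M, @maximal_ideal R T P M -> M `<=` @zero_divisor R T P;
       forall I J, @is_ideal R T P I -> @is_ideal R T P J ->
         I `<=` @zero_divisor R T P -> J `<=` @zero_divisor R T P ->
         @ideal_sum R T I J = @CP R T P \/ @ideal_sum R T I J `<=` @zero_divisor R T P;
       forall f, @CP R T P f -> ~ @is_unit R T P f ->
         exists g, [/\ @CP R T P g, g <> @fzero R T & @Pset R T P f `<=` @Ann R T P g]].
Proof.
tfae.
- exact: (L01 hP).
- exact: L12.
- exact: (L23 hP).
- by move=> h; apply: (L04 hP); apply: (L30 hP).
- by move=> h; apply: (L05 hP); apply: (L40 hP).
- exact: L50.
Qed.
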